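(* Let $n,m\in\mathbb{N}$, let $\mathcal{Y}\subset\mathbb{R}^m$ be nonempty, convex and compact, and let $f:2^{[n]}\times\mathbb{R}^m\to\mathbb{R}$ be such that $f(\cdot,y)$ is submodular for every $y$ and $f(S,\cdot)$ is concave and continuous for every $S\subset[n]$. Let $f^L$ be the Lovász extension of $f$ with respect to the first variable and let $\zeta(x)=\max_{y\in\mathcal{Y}}f^L(x,y)$ for $x\in[0,1]^n$. Suppose at least one of the following holds: (i) $\zeta$ is the Lovász extension of some submodular function $g:2^{[n]}\to\mathbb{R}$; (ii) the set of minimisers of $\zeta$ over $[0,1]^n$ contains a point of $\{0,1\}^n$; (iii) there exists $\bar x\in\{0,1\}^n$ such that $\bar x$ minimises $f^L(\cdot,y)$ over $[0,1]^n$ for every $y\in\mathcal{Y}$. Then $\min_{x\in[0,1]^n}\max_{y\in\mathcal{Y}}f^L(x,y)=\min_{x\in\{0,1\}^n}\max_{y\in\mathcal{Y}}f^L(x,y)$, and $f$ admits a saddle point on $2^{[n]}\times\mathcal{Y}$.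
   Context: $[n]=\{1,\dots,n\}$; subsets $S\subset[n]$ are identified with their indicator vectors in $\{0,1\}^n$. A set function $g:2^{[n]}\to\mathbb{R}$ is submodular if $g(S)+g(T)\ge g(S\cap T)+g(S\cup T)$ for all $S,T\subset[n]$. Lovász extension: for $g:2^{[n]}\to\mathbb{R}$ and $x\in[0,1]^n$, choose a permutation $(j_1,\dots,j_n)$ of $[n]$ with $x_{j_1}\ge\dots\ge x_{j_n}$ and set $g^L(x)=(1-x_{j_1})\,g(\emptyset)+\sum_{k=1}^{n-1}(x_{j_k}-x_{j_{k+1}})\,g(\{j_1,\dots,j_k\})+x_{j_n}\,g([n])$. For $f:2^{[n]}\times\mathbb{R}^m\to\mathbb{R}$, the Lovász extension with respect to the first variable is $f^L(x,y):=(f(\cdot,y))^L(x)$. A saddle point of $f$ on $2^{[n]}\times\mathcal{Y}$ is a pair $(S^*,y^* )$ with $f(S^*,y)\le f(S^*,y^* )\le f(S,y^* )$ for all $S\subset[n]$, $y\in\mathcal{Y}$. *)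

(* Defs.v *)
From HB Require Import structures.
From mathcomp Require Import all_boot all_order all_algebra.
From mathcomp Require Import all_classical all_reals all_analysis.
Set Implicit Arguments. Unset Strict Implicit. Unset Printing Implicit Defensive.
Import Order.TTheory GRing.Theory Num.Theory.
Import numFieldNormedType.Exports.
Local Open Scope classical_set_scope.
Local Open Scope ring_scope.

Section Defs.
Variable R : realType.

Definition submodular (n : nat) (g : {set 'I_n} -> R) : Prop :=
  forall S T : {set 'I_n}, g (S :&: T) + g (S :|: T) <= g S + g T.

Definition indic (n : nat) (S : {set 'I_n}) : 'I_n -> R :=
  fun i => if i \in S then 1 else 0.

Definition unit_cube (n : nat) : set ('I_n -> R) :=
  [set x | forall i, 0 <= x i <= 1].

Definition binary_pts (n : nat) : set ('I_n -> R) :=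
  [set x | exists S : {set 'I_n}, x = indic S].

(* enumeration j_1,...,j_n of [n] with x_{j_1} >= ... >= x_{j_n} *)
Definition lov_order (n : nat) (x : 'I_n -> R) : seq 'I_n :=
  sort (fun i j : 'I_n => x j <= x i) (enum 'I_n).

(* Lovász extension; with t_0 = 1, t_k = x_{j_k} (1<=k<=n), t_{n+1} = 0,
   g^L(x) = sum_{k=0}^{n} (t_k - t_{k+1}) g({j_1,...,j_k}),
   which is exactly the paper's formula for n >= 1. *)
Definition lovasz (n : nat) (g : {set 'I_n} -> R) (x : 'I_n -> R) : R :=
  let s := lov_order x in
  let t := fun k => nth 0 (1 :: map x s) k in
  \sum_(k < n.+1) (t k - t k.+1) * g (finset (fun i => i \in take k s)).

Definition lovasz2 (n m : nat) (f : {set 'I_n} -> 'rV[R]_m -> R)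
  (x : 'I_n -> R) (y : 'rV[R]_m) : R := lovasz (fun S => f S y) x.

Definition convex_subset (m : nat) (Y : set 'rV[R]_m) : Prop :=
  forall a b, Y a -> Y b -> forall t : R, 0 <= t <= 1 ->
    Y (t *: a + (1 - t) *: b).

Definition concave_fun (m : nat) (h : 'rV[R]_m -> R) : Prop :=
  forall a b, forall t : R, 0 <= t <= 1 ->
    t * h a + (1 - t) * h b <= h (t *: a + (1 - t) *: b).

(* zeta(x) = max_{y in Y} f^L(x,y), written as a supremum (it is attained) *)
Definition zeta (n m : nat) (f : {set 'I_n} -> 'rV[R]_m -> R)
  (Y : set 'rV[R]_m) (x : 'I_n -> R) : R :=
  sup [set lovasz2 f x y | y in Y].

Definition saddle_point (n m : nat) (f : {set 'I_n} -> 'rV[R]_m -> R)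
  (Y : set 'rV[R]_m) (S : {set 'I_n}) (y0 : 'rV[R]_m) : Prop :=
  Y y0 /\ (forall y, Y y -> f S y <= f S y0) /\
  (forall T : {set 'I_n}, f S y0 <= f T y0).

End Defs.

(* Main.v *)
Require Import Defs.
From HB Require Import structures.
From mathcomp Require Import all_boot all_order all_algebra.
From mathcomp Require Import all_classical all_reals all_analysis.
From mathcomp Require Import ring lra.
Import Order.TTheory GRing.Theory Num.Theory.
Import numFieldNormedType.Exports.
Local Open Scope classical_set_scope.
Local Open Scope ring_scope.
Section Comb.
Variable R : realType.
Variable n : nat.
Implicit Types (g : {set 'I_n} -> R) (x : 'I_n -> R).

Definition Aset (s : seq 'I_n) (k : nat) : {set 'I_n} := finset (fun i => i \in take k s).

Lemma lov_size x : size (lov_order x) = n.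
Proof. by rewrite /lov_order size_sort size_enum_ord. Qed.

Lemma lov_uniq x : uniq (lov_order x).
Proof. by rewrite /lov_order sort_uniq enum_uniq. Qed.

Lemma lov_mem x i : i \in lov_order x.
Proof. by rewrite /lov_order mem_sort mem_enum. Qed.

Lemma lov_sorted x (d : 'I_n) (i j : nat) : (i < j)%N -> (j < n)%N ->
  x (nth d (lov_order x) j) <= x (nth d (lov_order x) i).
Proof.
move=> ij jn.
have tr : transitive (fun i j : 'I_n => x j <= x i).
  by move=> a b c /= h1 h2; apply: le_trans h2 h1.
have := @sorted_ltn_nth _ _ tr d (lov_order x).
have so : sorted (fun i j : 'I_n => x j <= x i) (lov_order x).
  by apply: sort_sorted => a b; exact: le_total.
move/(_ so i j); rewrite !inE lov_size; apply => //; exact: ltn_trans ij jn.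
Qed.

Lemma Aset0 s : Aset s 0 = finset.set0.
Proof. by apply/setP => i; rewrite !inE take0. Qed.

Lemma AsetS (s : seq 'I_n) k (d : 'I_n) : (k < size s)%N ->
  Aset s k.+1 = nth d s k |: Aset s k.
Proof.
move=> ks; apply/setP => i; rewrite !inE (take_nth d ks) mem_rcons in_cons.
by [].
Qed.

Lemma Aset_full x : Aset (lov_order x) n = finset.setT.
Proof.
by apply/setP => i; rewrite !inE -[X in take X _](lov_size x) take_size lov_mem.
Qed.

Lemma lovasz_abel g x :
  lovasz g x = g finset.set0 + \sum_(k < n) nth 0 (map x (lov_order x)) k *
     (g (Aset (lov_order x) k.+1) - g (Aset (lov_order x) k)).
Proof.
rewrite /lovasz.
set s := lov_order x.
set t := fun k => nth 0 (1 :: map x s) k.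
set G := fun k => g (Aset s k).
have -> : \sum_(k < n.+1) (t k - t k.+1) * g (finset (fun i => i \in take k s)) =
   \sum_(k < n.+1) (t k * G k) - \sum_(k < n.+1) (t k.+1 * G k).
  by rewrite -sumrB; apply: eq_bigr => k _; rewrite mulrBl.
rewrite big_ord_recl big_ord_recr /=.
have -> : t n.+1 = 0.
  by rewrite /t /= nth_default // size_map lov_size.
have -> : t 0%N = 1 by [].
rewrite mul0r addr0 mul1r /G Aset0.
rewrite -addrA; congr (_ + _).
rewrite -sumrB; apply: eq_bigr => k _.
by rewrite /t /= mulrBr /bump add0n.
Qed.

Lemma Aset_notin x k (d : 'I_n) : (k < n)%N ->
  nth d (lov_order x) k \notin Aset (lov_order x) k.
Proof.
move=> kn; rewrite inE.
have ks : (k < size (lov_order x))%N by rewrite lov_size.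
have := take_uniq k.+1 (lov_uniq x).
by rewrite (take_nth d ks) rcons_uniq => /andP[].
Qed.

Lemma lov_greedy g x (T : {set 'I_n}) : submodular g ->
  g finset.set0 + \sum_(k < n) nth 0 (map (Defs.indic R T) (lov_order x)) k *
     (g (Aset (lov_order x) k.+1) - g (Aset (lov_order x) k)) <= g T.
Proof.
move=> sg.
set s := lov_order x.
suff H : forall j, (j <= n)%N -> g finset.set0 + \sum_(0 <= k < j)
   nth 0 (map (Defs.indic R T) s) k * (g (Aset s k.+1) - g (Aset s k))
   <= g (T :&: Aset s j).
  by have := H n (leqnn n); rewrite big_mkord Aset_full finset.setIT.
elim=> [_|k IH kn].
  by rewrite big_geq // addr0 Aset0 finset.setI0.
have kn' : (k < n)%N by [].
pose d := Ordinal kn'.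
have ks : (k < size s)%N by rewrite lov_size.
rewrite big_nat_recr //=.
have IH' := IH (ltnW kn).
rewrite (nth_map d) // /Defs.indic.
have nA := Aset_notin x k d kn'.
rewrite -/s in nA.
rewrite (@AsetS s k d ks).
set a := nth d s k in nA *.
rewrite inE in nA.
case: ifP => aT.
- have := sg (T :&: (a |: Aset s k)) (Aset s k).
  have -> : T :&: (a |: Aset s k) :&: Aset s k = T :&: Aset s k.
    apply/setP => i; rewrite !inE.
    case: (eqVneq i a) => [->|_]; rewrite ?(negbTE nA) ?aT /= ?andbF //.
    by case: (i \in T); case: (i \in take k s).
  have -> : T :&: (a |: Aset s k) :|: Aset s k = a |: Aset s k.
    apply/setP => i; rewrite !inE.
    case: (eqVneq i a) => [->|_]; rewrite ?(negbTE nA) ?aT /= ?andbF //.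
    by case: (i \in T); case: (i \in take k s).
  rewrite mul1r; move: IH'; rewrite addrA; lra.
- have -> : T :&: (a |: Aset s k) = T :&: Aset s k.
    apply/setP => i; rewrite !inE.
    case: (eqVneq i a) => [->|_]; rewrite ?(negbTE nA) ?aT /= ?andbF //.
  by rewrite mul0r addr0.
Qed.

Lemma lovasz_indic g (S : {set 'I_n}) : lovasz g (Defs.indic R S) = g S.
Proof.
rewrite lovasz_abel.
set x := Defs.indic R S.
set s := lov_order x.
suff H : forall j, (j <= n)%N -> g finset.set0 + \sum_(0 <= k < j)
   nth 0 (map x s) k * (g (Aset s k.+1) - g (Aset s k))
   = g (S :&: Aset s j).
  by have := H n (leqnn n); rewrite big_mkord Aset_full finset.setIT.
elim=> [_|k IH kn].
  by rewrite big_geq // addr0 Aset0 finset.setI0.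
have kn' : (k < n)%N by [].
pose d := Ordinal kn'.
have ks : (k < size s)%N by rewrite lov_size.
rewrite big_nat_recr //=.
have IH' := IH (ltnW kn).
rewrite (nth_map d) //.
rewrite (@AsetS s k d ks).
set a := nth d s k in IH' *.
rewrite addrA IH' {1}/x /Defs.indic.
case: ifP => aS.
- have sub : Aset s k \subset S.
    apply/fintype.subsetP => i; rewrite inE => ik.
    set j := index i (take k s).
    have jlt : (j < size (take k s))%N by rewrite index_mem.
    have jk : (j < k)%N.
      by move: jlt; rewrite size_take_min => /leq_trans; apply; exact: geq_minl.
    have ieq : i = nth d s j by rewrite -(nth_take d jk) nth_index.
    have := @lov_sorted x d j k jk kn'.
    rewrite -/s -ieq -/a /x /Defs.indic aS.
    by case: (i \in S) => //; rewrite ler10.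
  have e1 : S :&: Aset s k = Aset s k by apply/finset.setIidPr.
  have e2 : S :&: (a |: Aset s k) = a |: Aset s k.
    by apply/finset.setIidPr; rewrite finset.subUset finset.sub1set aS sub.
  rewrite e1 e2 mul1r; lra.
- have -> : S :&: (a |: Aset s k) = S :&: Aset s k.
    apply/setP => i; rewrite !inE; case: (i =P a) => [->|] //=.
    by rewrite aS.
  by rewrite mul0r addr0.
Qed.

Lemma lovasz_convex g (q : {set 'I_n} -> R) x : submodular g ->
  (forall T, 0 <= q T) -> \sum_T q T = 1 ->
  (forall i, x i = \sum_T q T * Defs.indic R T i) ->
  lovasz g x <= \sum_T q T * g T.
Proof.
move=> sg hq hs hx.
apply: (@le_trans _ _ (\sum_T q T * (g finset.set0 + \sum_(k < n)
   nth 0 (map (Defs.indic R T) (lov_order x)) k *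
     (g (Aset (lov_order x) k.+1) - g (Aset (lov_order x) k))))); last first.
  by apply: ler_sum => T _; apply: ler_wpM2l => //; exact: lov_greedy.
rewrite lovasz_abel le_eqVlt; apply/orP; left; apply/eqP.
under [RHS]eq_bigr do rewrite mulrDr.
rewrite big_split /= -mulr_suml hs mul1r; congr (_ + _).
under [RHS]eq_bigr do rewrite mulr_sumr.
rewrite exchange_big /=; apply: eq_bigr => k _.
rewrite (nth_map k) ?lov_size // hx mulr_suml; apply: eq_bigr => T _.
by rewrite (nth_map k) ?lov_size // mulrA.
Qed.

Lemma lov_nth_bd x k : unit_cube x -> 0 <= nth 0 (map x (lov_order x)) k <= 1.
Proof.
move=> hx; case: (ltnP k (size (lov_order x))) => ks.
  have kn : (k < n)%N by rewrite -(lov_size x).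
  by rewrite (nth_map (Ordinal kn)) //; exact: hx.
by rewrite nth_default ?size_map // lexx ler01.
Qed.

Lemma lovasz_lb g x (b : R) : unit_cube x -> (forall T, b <= g T) ->
  b <= lovasz g x.
Proof.
move=> hx hb.
rewrite /lovasz.
have tdec : forall k, (k < n.+1)%N ->
    nth 0 (1 :: map x (lov_order x)) k.+1 <= nth 0 (1 :: map x (lov_order x)) k.
  case=> [|k] kn /=.
    by have /andP[] := lov_nth_bd x 0 hx.
  case: (ltnP k.+1 n) => kn'.
    by rewrite (nth_map (Ordinal kn')) ?lov_size // (nth_map (Ordinal kn')) ?lov_size
        ?(ltnW kn') //; apply: lov_sorted.
  rewrite (@nth_default _ _ _ k.+1) ?size_map ?lov_size //.
  by have /andP[] := lov_nth_bd x k hx.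
apply: (@le_trans _ _ (\sum_(k < n.+1) (nth 0 (1 :: map x (lov_order x)) k -
    nth 0 (1 :: map x (lov_order x)) k.+1) * b)); last first.
  apply: ler_sum => k _; apply: ler_wpM2l; last exact: hb.
  by rewrite subr_ge0; apply: tdec.
rewrite -mulr_suml.
set t := fun k => nth 0 (1 :: map x (lov_order x)) k.
have -> : \sum_(k < n.+1) (t k - t k.+1) = 1.
  rewrite -(big_mkord xpredT (fun k => t k - t k.+1)).
  transitivity (- \sum_(0 <= k < n.+1) (t k.+1 - t k)).
    by rewrite -sumrN; apply: eq_bigr => k _; rewrite opprB.
  rewrite telescope_sumr // /t /= nth_default ?size_map ?lov_size //.
  by rewrite sub0r opprK.
by rewrite mul1r.
Qed.
End Comb.
Section Ana.
Variable R : realType.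

Lemma cont_sum {T : topologicalType} (I : finType) (F : I -> T -> R) :
  (forall i, continuous (F i)) -> continuous (fun y => \sum_i F i y).
Proof.
move=> hF.
apply: (@continuous_big R _ (@GRing.add R) 0 xpredT _ _ (index_enum I) F) => //.
exact: add_continuous.
Qed.

Lemma cont_cstM {T : topologicalType} (a : R) (h : T -> R) :
  continuous h -> continuous (fun y => a * h y).
Proof.
move=> hh y; apply: (@continuousM R T (fun _ => a) h y) => //.
exact: cst_continuous. exact: hh.
Qed.

Lemma maxsq (a u e : R) : u <= a - e ->
  (Num.max 0 u) ^+ 2 <= (Num.max 0 a - e) ^+ 2.
Proof.
move=> h.
have ha : a <= Num.max 0 a by rewrite le_max lexx orbT.
have h0 : 0 <= Num.max 0 a by rewrite le_max lexx.
rewrite [Num.max 0 u]maxEle.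
case: (leP 0 u) => hu.
  rewrite ler_sqr ?nnegrE; lra.
rewrite expr0n /=; exact: sqr_ge0.
Qed.

Variables (n m : nat) (Y : set 'rV[R]_m) (f : {set 'I_n} -> 'rV[R]_m -> R).
Hypotheses (Y0 : Y !=set0) (cpY : compact Y) (fcont : forall S, continuous (f S)).

Lemma lov2_cont x : continuous (fun y => lovasz2 f x y).
Proof.
rewrite /lovasz2 /lovasz /=.
apply: cont_sum => k; apply: cont_cstM; exact: fcont.
Qed.

Lemma argmax (h : 'rV[R]_m -> R) : continuous h ->
  exists2 y0, Y y0 & forall y, Y y -> h y <= h y0.
Proof.
move=> hc.
have [y0 y0Y hy] := EVT_max_rV Y0 cpY (@continuous_subspaceT _ _ Y h hc).
exists y0; first by rewrite inE in y0Y.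
by move=> y yY; apply: hy; rewrite inE.
Qed.

Lemma argmin (h : 'rV[R]_m -> R) : continuous h ->
  exists2 y0, Y y0 & forall y, Y y -> h y0 <= h y.
Proof.
move=> hc.
have [y0 y0Y hy] := EVT_min_rV Y0 cpY (@continuous_subspaceT _ _ Y h hc).
exists y0; first by rewrite inE in y0Y.
by move=> y yY; apply: hy; rewrite inE.
Qed.

Lemma zeta_ge x y : Y y -> lovasz2 f x y <= zeta f Y x.
Proof.
move=> yY.
have [y0 y0Y hy0] := argmax _ (lov2_cont x).
apply: (ub_le_sup (E := [set lovasz2 f x y | y in Y])).
  by exists (lovasz2 f x y0) => _ [z zY <-]; exact: hy0.
by exists y.
Qed.

Lemma zeta_le x B : (forall y, Y y -> lovasz2 f x y <= B) -> zeta f Y x <= B.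
Proof.
move=> hB; apply: ge_sup.
  by case: Y0 => y yY; exists (lovasz2 f x y); exists y.
by move=> _ [z zY <-]; exact: hB.
Qed.


Lemma sum_pos (F : {set 'I_n} -> R) T0 : (forall T, 0 <= F T) -> 0 < F T0 ->
  0 < \sum_T F T.
Proof.
move=> h0 h1; rewrite (bigD1 T0) //=.
have : 0 <= \sum_(T | T != T0) F T by apply: sumr_ge0 => T _; exact: h0.
lra.
Qed.

Lemma minimax (S : {set 'I_n}) : convex_subset Y ->
  (forall S, concave_fun (f S)) ->
  (forall y, submodular (fun S => f S y)) ->
  (forall x, unit_cube x -> zeta f Y (Defs.indic R S) <= zeta f Y x) ->
  exists2 y0, Y y0 & forall T, zeta f Y (Defs.indic R S) <= f T y0.
Proof.
move=> cvY fconc sg hmin.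
set c := zeta f Y (Defs.indic R S).
case: (pselect (exists2 y0, Y y0 & forall T, c <= f T y0)) => // nH.
have H : forall y, Y y -> exists T, f T y < c.
  move=> y yY; apply: contrapT => hn; apply: nH; exists y => // T.
  rewrite leNgt; apply/negP => hT; apply: hn; by exists T.
pose p y T := Num.max 0 (c - f T y).
pose phi y := \sum_T (p y T) ^+ 2.
have phic : continuous phi.
  apply: cont_sum => T y.
  have cm : {for y, continuous (fun z => Num.max 0 (c - f T z))}.
    apply: (@continuous_max R _ (fun _ => 0) (fun z => c - f T z)).
      exact: cst_continuous.
    apply: (@continuousB R _ _ (fun _ => c) (f T)); first exact: cst_continuous.
    exact: fcont.
  have := continuousM cm cm.
  by congr ({for y, continuous _}); apply: funext => z /=; rewrite expr2.
have [ys ysY ysmin] := argmin _ phic.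
pose P T := p ys T.
have P0 : forall T, 0 <= P T by move=> T; rewrite /P /p le_max lexx.
have stepA : forall y, Y y -> \sum_T P T * f T y <= \sum_T P T * f T ys.
  move=> y yY.
  pose d T := f T y - f T ys.
  set Q := \sum_T P T * d T.
  set D := \sum_T (d T) ^+ 2.
  have D0 : 0 <= D by apply: sumr_ge0 => T _; exact: sqr_ge0.
  have key : forall t, 0 < t -> t <= 1 -> 2 * Q <= t * D.
    move=> t t0 t1.
    have ytY : Y (t *: y + (1 - t) *: ys) by apply: cvY => //; rewrite (ltW t0) t1.
    have h1 := ysmin _ ytY.
    have h2 : phi (t *: y + (1 - t) *: ys) <= \sum_T (P T - t * d T) ^+ 2.
      apply: ler_sum => T _; rewrite /p /P /p; apply: maxsq.
      have : 0 <= t <= 1 by rewrite (ltW t0) t1.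
      move/(fconc T y ys t); rewrite /d; lra.
    have h3 : \sum_T (P T - t * d T) ^+ 2 = phi ys - 2 * t * Q + t ^+ 2 * D.
      transitivity (\sum_T (P T ^+ 2 + (- ((2 * t) * (P T * d T))) + t ^+ 2 * (d T) ^+ 2)).
        by apply: eq_bigr => T _; ring.
      rewrite !big_split /= sumrN -!mulr_sumr.
      by [].
    have : 2 * t * Q <= t ^+ 2 * D by lra.
    rewrite expr2 -mulrA -mulrA [2 * _]mulrC -mulrA ler_pM2l //; lra.
  have Qle : Q <= 0.
    rewrite leNgt; apply/negP => Qp.
    pose t := Q / (Q + D).
    have QD : 0 < Q + D by lra.
    have tQD : t * (Q + D) = Q by rewrite /t mulfVK // gt_eqF.
    have t0 : 0 < t by rewrite /t divr_gt0.
    have t1 : t <= 1 by rewrite /t ler_pdivrMr // mul1r; lra.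
    have := key t t0 t1; nra.
  move: Qle; rewrite /Q /d.
  under eq_bigr do rewrite mulrBr.
  rewrite sumrB; lra.
have [T0 hT0] := H ys ysY.
have PT0 : 0 < P T0 by rewrite /P /p lt_max; apply/orP; right; lra.
set sP := \sum_T P T.
have sP0 : 0 < sP by apply: (sum_pos _ T0).
set sP2 := \sum_T P T ^+ 2.
have sP20 : 0 < sP2.
  apply: (sum_pos _ T0); first by move=> T; exact: sqr_ge0.
  by rewrite exprn_gt0.
have stepB : \sum_T P T * f T ys = c * sP - sP2.
  rewrite /sP /sP2 mulr_sumr -sumrB; apply: eq_bigr => T _.
  rewrite /P /p maxEle; case: (leP 0 (c - f T ys)) => _; ring.
pose q T := P T / sP.
have q0 : forall T, 0 <= q T by move=> T; rewrite /q divr_ge0 // ltW.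
have qs : \sum_T q T = 1 by rewrite /q -mulr_suml -/sP divff // gt_eqF.
pose x := fun i => \sum_T q T * Defs.indic R T i.
have ind01 : forall (T : {set 'I_n}) (i : 'I_n), 0 <= Defs.indic R T i <= 1.
  by move=> T i; rewrite /Defs.indic; case: (i \in T); rewrite ?lexx ?ler01.
have xc : unit_cube x.
  move=> i; apply/andP; split.
    apply: sumr_ge0 => T _; apply: mulr_ge0 => //.
    by have /andP[] := ind01 T i.
  rewrite -qs; apply: ler_sum => T _.
  have /andP[_ h] := ind01 T i.
  by rewrite -[leRHS]mulr1; apply: ler_wpM2l.
have zx : zeta f Y x <= c - sP2 / sP.
  apply: zeta_le => y yY.
  have := @lovasz_convex R n (fun S => f S y) q x (sg y) q0 qs (fun i => erefl).
  move=> /le_trans; apply.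
  have -> : \sum_T q T * f T y = (\sum_T P T * f T y) / sP.
    by rewrite mulr_suml; apply: eq_bigr => T _; rewrite /q mulrAC.
  rewrite ler_pdivrMr // mulrBl divfK ?gt_eqF // -stepB.
  exact: stepA.
exfalso; have := hmin x xc; rewrite -/c.
have : 0 < sP2 / sP by rewrite divr_gt0.
lra.
Qed.

End Ana.

Lemma indic_cube (R : realType) (n : nat) (S : {set 'I_n}) :
  unit_cube (Defs.indic R S).
Proof. by move=> i; rewrite /Defs.indic; case: (i \in S); rewrite ?lexx ?ler01. Qed.

Theorem proposition2 (R : realType) (n m : nat)
  (Y : set 'rV[R]_m) (f : {set 'I_n} -> 'rV[R]_m -> R) :
  Y !=set0 -> convex_subset Y -> compact Y ->
  (forall y, submodular (fun S => f S y)) ->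
  (forall S, concave_fun (f S)) ->
  (forall S, continuous (f S)) ->
  ((exists g : {set 'I_n} -> R, submodular g /\
      forall x, unit_cube x -> zeta f Y x = lovasz g x)
   \/ (exists xb, binary_pts xb /\ unit_cube xb /\
         forall x, unit_cube x -> zeta f Y xb <= zeta f Y x)
   \/ (exists xb, binary_pts xb /\
         forall y, Y y -> forall x, unit_cube x ->
           lovasz2 f xb y <= lovasz2 f x y)) ->
  (exists xc, unit_cube xc /\ (forall x, unit_cube x -> zeta f Y xc <= zeta f Y x) /\
   exists xb, binary_pts xb /\ (forall x, binary_pts x -> zeta f Y xb <= zeta f Y x) /\
   zeta f Y xc = zeta f Y xb)
  /\ (exists S y0, saddle_point f Y S y0).
Proof.
move=> Y0 cvY cpY sg fconc fcont hyp.
have [S hS] : exists S : {set 'I_n}, forall x, unit_cube x ->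
    zeta f Y (Defs.indic R S) <= zeta f Y x.
  case: hyp => [[g [sgg hg]] | [[xb [[S ->] [_ h]]] | [xb [[S ->] h]]]].
  - pose S0 := [arg min_(T < finset.set0) g T]%O.
    have hS0 : forall T, g S0 <= g T.
      by move=> T; rewrite /S0; case: arg_minP => // T1 _ hT1; exact: hT1.
    exists S0 => x hx.
    rewrite (hg _ (@indic_cube R n S0)) (hg x hx) lovasz_indic.
    exact: lovasz_lb.
  - by exists S.
  - exists S => x hx; apply: (zeta_le _ _ _ _ _ Y0) => y yY.
    exact: le_trans (h y yY x hx) (zeta_ge _ _ _ _ _ Y0 cpY fcont x y yY).
have [y0 y0Y hy0] := minimax _ _ _ _ _ Y0 cpY fcont S cvY fconc sg hS.
have lS : forall y, lovasz2 f (Defs.indic R S) y = f S y.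
  by move=> y; rewrite /lovasz2 lovasz_indic.
have fSle : forall y, Y y -> f S y <= zeta f Y (Defs.indic R S).
  by move=> y yY; rewrite -lS; exact: (zeta_ge _ _ _ _ _ Y0 cpY fcont).
split.
- exists (Defs.indic R S); split; first exact: indic_cube.
  split; first exact: hS.
  exists (Defs.indic R S); split; first by exists S.
  split => //.
  by move=> x [T ->]; apply: hS; exact: indic_cube.
- exists S, y0; split => //; split.
  + by move=> y yY; apply: le_trans (fSle y yY) (hy0 S).
  + by move=> T; apply: le_trans (fSle y0 y0Y) (hy0 T).
Qed.
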